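(* Let $(\mathcal C,\mathcal D,O,\vec z,v)$ be a configuration for $(F,f)$, let $C$ be a PB constraint, and suppose there is a substitution $\omega$ such that $$\mathcal C\cup\mathcal D\cup\{f\le v-1\}\cup\{\neg C\}\ \vdash\ (\mathcal C\cup\mathcal D\cup\{C\})|_\omega\ \cup\ \{f|_\omega\le f\}\ \cup\ O(\vec z|_\omega,\vec z).$$ If $(\mathcal C,\mathcal D,O,\vec z,v)$ is weakly valid, then $(\mathcal C,\mathcal D\cup\{C\},O,\vec z,v)$ is weakly valid; if it is valid, then $(\mathcal C,\mathcal D\cup\{C\},O,\vec z,v)$ is valid.
   Context: Boolean variables take values in $\{0,1\}$; a literal is a variable $x$ or $\bar x=1-x$. A PB constraint is $C:\ \sum_i a_i\ell_i\ge A$ with integer $a_i,A$; its negation $\neg C$ is $\sum_i -a_i\ell_i\ge -A+1$. A total assignment $\alpha$ satisfies $C$ if $\sum_i a_i\alpha(\ell_i)\ge A$. A PB formula is a finite set of PB constraints. A substitution $\omega$ maps variables to literals or to $\{0,1\}$ (identity outside its domain, extended to literals by $\omega(\bar x)=\overline{\omega(x)}$); $C|_\omega$ replaces each $\ell_i$ by $\omega(\ell_i)$, $G|_\omega=\{D|_\omega: D\in G\}$, and for a total assignment $\alpha$, $\alpha\circ\omega$ is $x\mapsto\alpha(\omega(x))$. An objective is $f=\sum_i w_i\ell_i$ with integer $w_i$; $f|_\omega=\sum_i w_i\omega(\ell_i)$; $f\le k$ and $f|_\omega\le f$ are read as PB constraints, and for $k=\infty$ the constraints $f\le\infty$, $f\le\infty-1$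 are trivially true (empty). $G\vdash D$ means $D$ is derivable from $G$ in the cutting planes system (axioms from $G$, literal axioms $\ell\ge0$, positive integer linear combinations, division of a constraint with nonnegative coefficients by a positive integer rounding coefficients and degree up), where additionally $G\vdash D$ whenever $0\ge1$ is so derivable from $G\cup\{\neg D\}$; $G\vdash H$ for a set $H$ means $G\vdash D$ for all $D\in H$. This derivability is sound (every total assignment satisfying $G$ satisfies $D$). A preorder encoding is a PB formula $O(\vec u,\vec v)$ over two lists of $n$ placeholder variables with a list $\vec z=(z_1,\dots,z_n)$ of variables, such that $\alpha\preceq\beta$ iff $O(\vec z|_\alpha,\vec z|_\beta)$ is true is reflexive and transitive; here $O(\vec z|_\alpha,\vec z|_\beta)$ is $O$ with $u_i$ replaced by $\alpha(z_i)$ and $v_i$ by $\beta(z_i)$, so $O(\vec z|_\omega,\vec z)$ replaces $u_i$ by $\omega(z_i)$ and $v_i$ by $z_i$. $\alpha\preceq_f\beta$ iff $\alpha\preceq\beta$ and $f(\alpha)\le f(\beta)$. Fix input $F$ and objective $f$. A configuration $(\mathcal C,\mathcal D,O,\vec z,v)$ has PB sets $\mathcal C,\mathcal D$, a preorder encoding, and $v\in\mathbb Z\cup\{\infty\}$. It is weakly valid if (1) for every integer $v'<v$, satisfiability of $F\cup\{f\le v'\}$ implies satisfiability of $\mathcal C\cup\{f\le v'\}$; (2) every total $\rho$ satisfying $\mathcal C\cup\{f\le v-1\}$ admits a total $\rho'\preceq_f\rho$ satisfying $\mathcal C\cup\mathcal D\cup\{f\le v-1\}$. It is valid if also (3) $v<\infty$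 implies $F\cup\{f\le v\}$ satisfiable; (4) for every integer $v'<v$, satisfiability of $\mathcal C\cup\{f\le v'\}$ implies satisfiability of $F\cup\{f\le v'\}$. *)

(* Defs.v *)
From Stdlib Require Import ZArith List.
Import ListNotations.
Open Scope Z_scope.

Definition var := nat.

Inductive lit (V : Type) := Pos (x : V) | Neg (x : V).
Arguments Pos {V} x.
Arguments Neg {V} x.

Record con (V : Type) := Con { terms : list (Z * lit V); degree : Z }.
Arguments Con {V} terms degree.
Arguments terms {V} c.
Arguments degree {V} c.

Definition formula (V : Type) := list (con V).

Definition b2z (b : bool) : Z := if b then 1 else 0.

Definition lit_val {V} (a : V -> bool) (l : lit V) : Z :=
  match l with Pos x => b2z (a x) | Neg x => 1 - b2z (a x) end.

Definition lhs {V} (a : V -> bool) (ts : list (Z * lit V)) : Z :=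
  fold_right (fun t s => fst t * lit_val a (snd t) + s) 0 ts.

Definition sat_con {V} (a : V -> bool) (C : con V) : Prop :=
  degree C <= lhs a (terms C).

Definition sat {V} (a : V -> bool) (G : formula V) : Prop :=
  forall C, In C G -> sat_con a C.

Definition satisfiable (G : formula var) : Prop := exists a : var -> bool, sat a G.

Definition negc {V} (C : con V) : con V :=
  Con (map (fun t => (- fst t, snd t)) (terms C)) (- degree C + 1).

(* Coefficient of variable x in the linear form, using  x-bar = 1 - x *)
Definition coef (ts : list (Z * lit var)) (x : var) : Z :=
  fold_right (fun t s =>
    match snd t with
    | Pos y => if Nat.eqb x y then fst t + s else s
    | Neg y => if Nat.eqb x y then s - fst t else s
    end) 0 ts.

(* Constant contributed by negative literals (a * x-bar = a - a * x) *)
Definition negconst (ts : list (Z * lit var)) : Z :=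
  fold_right (fun t s => match snd t with Neg _ => fst t + s | Pos _ => s end) 0 ts.

(* Two constraints are the same linear inequality (after rewriting
   x-bar = 1 - x and collecting terms): syntactic normalization. *)
Definition same_ineq (C D : con var) : Prop :=
  (forall x, coef (terms C) x = coef (terms D) x) /\
  degree C - negconst (terms C) = degree D - negconst (terms D).

Definition ceil_div (a d : Z) : Z := - ((- a) / d).

Inductive cp (G : formula var) : con var -> Prop :=
| cp_ax C : In C G -> cp G C
| cp_lit (l : lit var) : cp G (Con [(1, l)] 0)
| cp_add C D : cp G C -> cp G D ->
    cp G (Con (terms C ++ terms D) (degree C + degree D))
| cp_mul (c : Z) C : 0 < c -> cp G C ->
    cp G (Con (map (fun t => (c * fst t, snd t)) (terms C)) (c * degree C))
| cp_div (d : Z) C : 0 < d -> (forall t, In t (terms C) -> 0 <= fst t) -> cp G C ->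
    cp G (Con (map (fun t => (ceil_div (fst t) d, snd t)) (terms C))
              (ceil_div (degree C) d))
| cp_norm C D : cp G C -> same_ineq C D -> cp G D.

Definition contradiction : con var := Con [] 1.

Definition derives (G : formula var) (D : con var) : Prop :=
  cp G D \/ cp (negc D :: G) contradiction.

Definition derives_all (G H : formula var) : Prop :=
  forall D, In D H -> derives G D.

Inductive img (V : Type) := ILit (l : lit V) | IConst (b : bool).
Arguments ILit {V} l.
Arguments IConst {V} b.

Definition lit_neg {V} (l : lit V) : lit V :=
  match l with Pos x => Neg x | Neg x => Pos x end.

Definition img_neg {V} (i : img V) : img V :=
  match i with ILit l => ILit (lit_neg l) | IConst b => IConst (negb b) end.

Definition subst_lit {V W} (s : V -> img W) (l : lit V) : img W :=
  match l with Pos x => s x | Neg x => img_neg (s x) end.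

(* Replace each literal by its image; constant terms are collected
   (second component) so they can be moved to the degree. *)
Definition subst_terms {V W} (s : V -> img W) (ts : list (Z * lit V))
  : list (Z * lit W) * Z :=
  fold_right (fun t acc =>
    match subst_lit s (snd t) with
    | ILit l => ((fst t, l) :: fst acc, snd acc)
    | IConst b => (fst acc, fst t * b2z b + snd acc)
    end) ([], 0) ts.

Definition subst_con {V W} (s : V -> img W) (C : con V) : con W :=
  Con (fst (subst_terms s (terms C))) (degree C - snd (subst_terms s (terms C))).

Definition subst := list (var * img var).

Definition apply_subst (w : subst) (x : var) : img var :=
  match find (fun p => Nat.eqb (fst p) x) w with
  | Some p => snd p
  | None => ILit (Pos x)
  end.

Definition subst_formula (w : subst) (G : formula var) : formula var :=
  map (subst_con (apply_subst w)) G.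

Definition objective := list (Z * lit var).

Definition obj_val (a : var -> bool) (f : objective) : Z := lhs a f.

Inductive ext := Fin (k : Z) | Inf.

(* f <= k  as  sum -w_i l_i >= -k ; empty for k = infinity *)
Definition obj_le (f : objective) (k : ext) : formula var :=
  match k with
  | Fin k => [Con (map (fun t => (- fst t, snd t)) f) (- k)]
  | Inf => []
  end.

Definition ext_pred (k : ext) : ext :=
  match k with Fin k => Fin (k - 1) | Inf => Inf end.

Definition lt_ext (v' : Z) (v : ext) : Prop :=
  match v with Fin k => v' < k | Inf => True end.

(* f|_w <= f  as  f - f|_w >= 0 *)
Definition obj_subst_le (f : objective) (w : subst) : con var :=
  let p := subst_terms (apply_subst w) f in
  Con (f ++ map (fun t => (- fst t, snd t)) (fst p)) (snd p).

Inductive pvar := PU (i : nat) | PV (i : nat).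

Definition pvar_index (p : pvar) : nat := match p with PU i => i | PV i => i end.
Definition lit_var {V} (l : lit V) : V := match l with Pos x => x | Neg x => x end.

Definition O_holds (O : formula pvar) (z : list var) (a b : var -> bool) : Prop :=
  sat (fun p => match p with
                | PU i => a (nth i z 0%nat)
                | PV i => b (nth i z 0%nat)
                end) O.

Definition preorder_encoding (O : formula pvar) (z : list var) : Prop :=
  (forall C t, In C O -> In t (terms C) -> (pvar_index (lit_var (snd t)) < length z)%nat) /\
  (forall a, O_holds O z a a) /\
  (forall a b c, O_holds O z a b -> O_holds O z b c -> O_holds O z a c).

Definition O_subst (O : formula pvar) (z : list var) (w : subst) : formula var :=
  map (subst_con (fun p => match p with
                           | PU i => apply_subst w (nth i z 0%nat)
                           | PV i => ILit (Pos (nth i z 0%nat))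
                           end)) O.

Definition preceq_f (O : formula pvar) (z : list var) (f : objective)
  (a b : var -> bool) : Prop :=
  O_holds O z a b /\ obj_val a f <= obj_val b f.

Definition weakly_valid (F : formula var) (f : objective)
  (C D : formula var) (O : formula pvar) (z : list var) (v : ext) : Prop :=
  (forall v' : Z, lt_ext v' v ->
     satisfiable (F ++ obj_le f (Fin v')) -> satisfiable (C ++ obj_le f (Fin v'))) /\
  (forall rho : var -> bool, sat rho (C ++ obj_le f (ext_pred v)) ->
     exists rho' : var -> bool, preceq_f O z f rho' rho /\
       sat rho' (C ++ D ++ obj_le f (ext_pred v))).

Definition valid (F : formula var) (f : objective)
  (C D : formula var) (O : formula pvar) (z : list var) (v : ext) : Prop :=
  weakly_valid F f C D O z v /\
  (forall k : Z, v = Fin k -> satisfiable (F ++ obj_le f (Fin k))) /\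
  (forall v' : Z, lt_ext v' v ->
     satisfiable (C ++ obj_le f (Fin v')) -> satisfiable (F ++ obj_le f (Fin v'))).

(* Main.v *)
Require Import Defs.
From Stdlib Require Import ZArith List Lia.
Import ListNotations.
Open Scope Z_scope.

Lemma b2z_range b : 0 <= b2z b <= 1.
Proof. destruct b; simpl; lia. Qed.

Lemma lit_val_range {V} (a : V -> bool) l : 0 <= lit_val a l <= 1.
Proof. destruct l; unfold lit_val; pose proof (b2z_range (a x)); lia. Qed.

Lemma lhs_app {V} (a : V -> bool) ts1 ts2 : lhs a (ts1 ++ ts2) = lhs a ts1 + lhs a ts2.
Proof. induction ts1 as [|t ts IH]; simpl; [lia|]. unfold lhs in *; simpl. rewrite IH. lia. Qed.

Lemma lhs_neg {V} (a : V -> bool) ts :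
  lhs a (map (fun t => (- fst t, snd t)) ts) = - lhs a ts.
Proof. induction ts as [|t ts IH]; simpl; [lia|]. unfold lhs in *; simpl. rewrite IH. lia. Qed.

Lemma lhs_mul {V} (a : V -> bool) c ts :
  lhs a (map (fun t => (c * fst t, snd t)) ts) = c * lhs a ts.
Proof. induction ts as [|t ts IH]; simpl; [lia|]. unfold lhs in *; simpl. rewrite IH. lia. Qed.

Lemma ceil_div_ge a d : 0 < d -> a <= d * ceil_div a d.
Proof. intros Hd. unfold ceil_div. pose proof (Z.mul_div_le (-a) d Hd). lia. Qed.

Lemma lhs_div {V} (a : V -> bool) d ts : 0 < d ->
  lhs a ts <= d * lhs a (map (fun t => (ceil_div (fst t) d, snd t)) ts).
Proof. intros Hd. induction ts as [|t ts IH]; simpl; [unfold lhs; simpl; lia|].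
  unfold lhs in *; simpl. pose proof (ceil_div_ge (fst t) d Hd).
  pose proof (lit_val_range a (snd t)). nia. Qed.

Lemma ceil_div_le a S d : 0 < d -> a <= d * S -> ceil_div a d <= S.
Proof. intros Hd H. unfold ceil_div.
  assert (-S <= (-a)/d). { apply Z.div_le_lower_bound; lia. } lia. Qed.

Definition sumZ (h : nat -> Z) (L : list nat) : Z := fold_right (fun x s => h x + s) 0 L.

Lemma sumZ_ext h1 h2 L : (forall x, In x L -> h1 x = h2 x) -> sumZ h1 L = sumZ h2 L.
Proof. intros H; induction L; simpl; [lia|]. rewrite H, IHL; simpl; auto; intros; apply H; simpl; auto. Qed.

Lemma sumZ_add h1 h2 L : sumZ (fun x => h1 x + h2 x) L = sumZ h1 L + sumZ h2 L.
Proof. induction L; simpl; lia. Qed.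

Lemma sumZ_zero L : sumZ (fun _ => 0) L = 0.
Proof. induction L; simpl; lia. Qed.

Lemma sumZ_delta e y L : NoDup L -> In y L ->
  sumZ (fun x => if Nat.eqb x y then e else 0) L = e.
Proof. induction 1; simpl; [tauto|]. intros [<-|Hin].
  - rewrite Nat.eqb_refl. rewrite (sumZ_ext _ (fun _ => 0)), sumZ_zero; [lia|].
    intros x0 Hx0. destruct (Nat.eqb_spec x0 x); subst; tauto.
  - rewrite IHNoDup; auto. destruct (Nat.eqb_spec x y); subst; tauto.
Qed.

Lemma coef_nil x : coef [] x = 0.
Proof. reflexivity. Qed.

Lemma lhs_key (a : var -> bool) ts L : NoDup L ->
  (forall t, In t ts -> In (lit_var (snd t)) L) ->
  lhs a ts = negconst ts + sumZ (fun x => coef ts x * b2z (a x)) L.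
Proof. intros ND. induction ts as [|t ts IH]; intros Hin.
  - simpl. rewrite sumZ_zero. reflexivity.
  - assert (Hy : In (lit_var (snd t)) L) by (apply Hin; left; auto).
    change (lhs a (t::ts)) with (fst t * lit_val a (snd t) + lhs a ts).
    rewrite IH by (intros; apply Hin; right; auto); clear IH.
    destruct t as [c [y|y]]; simpl in Hy.
    + rewrite (sumZ_ext (fun x => coef ((c, Pos y) :: ts) x * b2z (a x))
         (fun x => coef ts x * b2z (a x) + (if Nat.eqb x y then c * b2z (a y) else 0))).
      * rewrite sumZ_add, sumZ_delta; auto. simpl. lia.
      * intros x _. simpl. destruct (Nat.eqb_spec x y); subst; lia.
    + rewrite (sumZ_ext (fun x => coef ((c, Neg y) :: ts) x * b2z (a x))
         (fun x => coef ts x * b2z (a x) + (if Nat.eqb x y then - c * b2z (a y) else 0))).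
      * rewrite sumZ_add, sumZ_delta; auto. unfold lit_val, negconst; cbn [fst snd fold_right]. nia.
      * intros x _. simpl. destruct (Nat.eqb_spec x y); subst; lia.
Qed.

Lemma same_ineq_sound (a : var -> bool) C D : same_ineq C D -> sat_con a C -> sat_con a D.
Proof. intros [Hc Hd] HC. unfold sat_con in *.
  set (L := nodup Nat.eq_dec (map (fun t => lit_var (snd t)) (terms C ++ terms D))).
  assert (ND : NoDup L) by apply NoDup_nodup.
  assert (HL : forall t, In t (terms C ++ terms D) -> In (lit_var (snd t)) L).
  { intros t Ht. apply nodup_In. apply in_map_iff. eauto. }
  rewrite (lhs_key a (terms C) L) in HC by (auto; intros; apply HL; apply in_or_app; auto).
  rewrite (lhs_key a (terms D) L) by (auto; intros; apply HL; apply in_or_app; auto).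
  rewrite (sumZ_ext _ (fun x => coef (terms C) x * b2z (a x))) by (intros; rewrite Hc; auto).
  lia.
Qed.

Lemma cp_sound (a : var -> bool) G D : sat a G -> cp G D -> sat_con a D.
Proof. intros HG. induction 1.
  - apply HG; auto.
  - unfold sat_con, lhs; cbn [degree terms fold_right fst snd]. pose proof (lit_val_range a l). lia.
  - unfold sat_con in *; simpl. rewrite lhs_app. lia.
  - unfold sat_con in *; simpl. rewrite lhs_mul. nia.
  - unfold sat_con in *; simpl. apply ceil_div_le; auto.
    pose proof (lhs_div a d (terms C) H). lia.
  - eapply same_ineq_sound; eauto.
Qed.

Lemma derives_sound (a : var -> bool) G D : sat a G -> derives G D -> sat_con a D.
Proof. intros HG [H|H]; [eapply cp_sound; eauto|].
  destruct (Z_le_gt_dec (degree D) (lhs a (terms D))) as [ok|bad]; [exact ok|].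
  exfalso. assert (sat a (negc D :: G)).
  { intros X [<-|HX]; auto. unfold sat_con, negc; simpl. rewrite lhs_neg. lia. }
  pose proof (cp_sound a _ _ H0 H). unfold sat_con, lhs in H1; simpl in H1. lia.
Qed.

Definition img_z {W} (a : W -> bool) (i : img W) : Z :=
  match i with ILit l => lit_val a l | IConst b => b2z b end.

Definition cb {V W} (a : W -> bool) (s : V -> img W) (x : V) : bool :=
  match s x with ILit (Pos y) => a y | ILit (Neg y) => negb (a y) | IConst b => b end.

Lemma b2z_negb b : b2z (negb b) = 1 - b2z b.
Proof. destruct b; reflexivity. Qed.

Lemma b2z_cb {V W} (a : W -> bool) (s : V -> img W) x : b2z (cb a s x) = img_z a (s x).
Proof. unfold cb. destruct (s x) as [[y|y]|b]; unfold img_z, lit_val; try rewrite b2z_negb; reflexivity. Qed.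

Lemma img_neg_z {W} (a : W -> bool) i : img_z a (img_neg i) = 1 - img_z a i.
Proof. destruct i as [[y|y]|b]; unfold img_z, img_neg, lit_neg, lit_val; try rewrite b2z_negb; lia. Qed.

Lemma lit_subst {V W} (a : W -> bool) (s : V -> img W) l :
  lit_val (cb a s) l = img_z a (subst_lit s l).
Proof. destruct l as [x|x]; unfold lit_val at 1; unfold subst_lit.
  - apply b2z_cb.
  - rewrite img_neg_z, b2z_cb. reflexivity. Qed.

Lemma subst_terms_lhs {V W} (a : W -> bool) (s : V -> img W) ts :
  lhs a (fst (subst_terms s ts)) + snd (subst_terms s ts) = lhs (cb a s) ts.
Proof. induction ts as [|t ts IH]; [reflexivity|].
  change (lhs (cb a s) (t :: ts)) with (fst t * lit_val (cb a s) (snd t) + lhs (cb a s) ts).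
  rewrite lit_subst, <- IH. unfold subst_terms; cbn [fold_right].
  fold (subst_terms s ts).
  destruct (subst_lit s (snd t)) as [l|b]; cbn [fst snd img_z].
  - change (lhs a ((fst t, l) :: fst (subst_terms s ts))) with
      (fst t * lit_val a l + lhs a (fst (subst_terms s ts))). lia.
  - lia.
Qed.

Lemma subst_con_sat {V W} (a : W -> bool) (s : V -> img W) C :
  sat_con a (subst_con s C) -> sat_con (cb a s) C.
Proof. unfold sat_con, subst_con; cbn [degree terms]. rewrite <- subst_terms_lhs. lia. Qed.

Lemma lhs_ext {V} (a b : V -> bool) ts : (forall x, a x = b x) -> lhs a ts = lhs b ts.
Proof. intros H. induction ts as [|t ts IH]; [reflexivity|].
  change (fst t * lit_val a (snd t) + lhs a ts = fst t * lit_val b (snd t) + lhs b ts).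
  rewrite IH. destruct (snd t); unfold lit_val; rewrite H; reflexivity. Qed.

Lemma obj_le_mono f v (a b : var -> bool) :
  obj_val a f <= obj_val b f -> sat b (obj_le f v) -> sat a (obj_le f v).
Proof. intros Hab Hb. destruct v as [k|]; [|intros X []].
  intros X [<-|[]]. specialize (Hb _ (or_introl eq_refl)).
  unfold sat_con, obj_val in *; cbn [degree terms] in *. rewrite lhs_neg in *. lia. Qed.

Lemma step (f : objective) (C D : formula var) (O : formula pvar) (z : list var) (v : ext)
  (Cn : con var) (w : subst) :
  preorder_encoding O z ->
  derives_all (C ++ D ++ obj_le f (ext_pred v) ++ [negc Cn])
    (subst_formula w (C ++ D ++ [Cn]) ++ [obj_subst_le f w] ++ O_subst O z w) ->
  forall rho rho', preceq_f O z f rho' rho -> sat rho' (C ++ D ++ obj_le f (ext_pred v)) ->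
  exists rho'', preceq_f O z f rho'' rho /\ sat rho'' (C ++ (D ++ [Cn]) ++ obj_le f (ext_pred v)).
Proof.
  intros [_ [_ Htr]] Hder rho rho' [HO Hf] Hs.
  destruct (Z_le_gt_dec (degree Cn) (lhs rho' (terms Cn))) as [ok|bad].
  { exists rho'. split; [split; auto|].
    intros X HX. rewrite !in_app_iff in HX. destruct HX as [H|[[H|H]|H]];
    try (apply Hs; rewrite !in_app_iff; tauto).
    destruct H as [<-|[]]; exact ok. }
  assert (HG : sat rho' (C ++ D ++ obj_le f (ext_pred v) ++ [negc Cn])).
  { intros X HX. rewrite !in_app_iff in HX. destruct HX as [H|[H|[H|H]]];
    try (apply Hs; rewrite !in_app_iff; tauto).
    destruct H as [<-|[]].
    unfold sat_con, negc; cbn [degree terms]. rewrite lhs_neg. lia. }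
  assert (Hall : forall X, In X (subst_formula w (C ++ D ++ [Cn]) ++ [obj_subst_le f w] ++ O_subst O z w) -> sat_con rho' X).
  { intros X HX. eapply derives_sound; eauto. }
  set (r2 := cb rho' (apply_subst w)).
  assert (Hsub : forall Y, In Y (C ++ D ++ [Cn]) -> sat_con r2 Y).
  { intros Y HY. apply subst_con_sat. apply Hall. apply in_or_app; left.
    unfold subst_formula. apply in_map; auto. }
  assert (Hobj : obj_val r2 f <= obj_val rho' f).
  { assert (H := Hall (obj_subst_le f w) ltac:(apply in_or_app; right; left; auto)).
    unfold sat_con, obj_subst_le in H; cbn [degree terms] in H.
    rewrite lhs_app, lhs_neg in H. unfold obj_val, r2. rewrite <- subst_terms_lhs. lia. }
  assert (HO2 : O_holds O z r2 rho').
  { intros Y HY. assert (H := Hall _ ltac:(apply in_or_app; right; right;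
       unfold O_subst; apply in_map; exact HY)).
    apply subst_con_sat in H. unfold sat_con in *. erewrite lhs_ext; [exact H|].
    intros [i|i]; reflexivity. }
  exists r2. split; [split; [exact (Htr _ _ _ HO2 HO) | lia]|].
  intros X HX. rewrite !in_app_iff in HX. destruct HX as [H|[[H|H]|H]].
  - apply Hsub; rewrite !in_app_iff; tauto.
  - apply Hsub; rewrite !in_app_iff; tauto.
  - apply Hsub; rewrite !in_app_iff; tauto.
  - refine (obj_le_mono f (ext_pred v) r2 rho' Hobj _ X H). intros Y HY; apply Hs; rewrite !in_app_iff; tauto.
Qed.

Theorem mainTheorem4 (F : formula var) (f : objective)
  (C D : formula var) (O : formula pvar) (z : list var) (v : ext)
  (Cn : con var) (w : subst) :
  preorder_encoding O z ->
  derives_all (C ++ D ++ obj_le f (ext_pred v) ++ [negc Cn])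
    (subst_formula w (C ++ D ++ [Cn]) ++ [obj_subst_le f w] ++ O_subst O z w) ->
  (weakly_valid F f C D O z v -> weakly_valid F f C (D ++ [Cn]) O z v) /\
  (valid F f C D O z v -> valid F f C (D ++ [Cn]) O z v).
Proof.
  intros Hpre Hder.
  assert (W : weakly_valid F f C D O z v -> weakly_valid F f C (D ++ [Cn]) O z v).
  { intros [H1 H2]. split; [exact H1|]. intros rho Hrho.
    destruct (H2 rho Hrho) as [rho' [Hp Hs]]. eapply step; eauto. }
  split; [exact W|]. intros [Hw [H3 H4]]. split; [apply W; exact Hw|]. split; assumption.
Qed.
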